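(* Under the standing setup, for all $t\ge0$ and $u_0\in\mathbb R^d$, $\mathscr S(t)u_0=\sup_{n\in\mathbb N}\mathcal E_{t/n}^{\,n}u_0=\lim_{n\to\infty}\mathcal E_{2^{-n}t}^{\,2^n}u_0,$ where $\mathcal E_h^{\,k}$ denotes the $k$-fold composition of $\mathcal E_h$.
   Context: Standing setup: $d\in\mathbb N$; vectors in $\mathbb R^d$; inequalities and suprema of vectors are componentwise; reals are identified with constant vectors. A $Q$-matrix is $q\in\mathbb R^{d\times d}$ with $q_{ii}\le0$, $q_{ij}\ge0$ ($i\ne j$), $\sum_jq_{ij}=0$. Let $\mathcal P$ be a set of $Q$-matrices and $f=(f_q)_{q\in\mathcal P}\subset\mathbb R^d$ with $\sup_{q\in\mathcal P}f_q=f_{q_0}=0$ for some $q_0\in\mathcal P$, such that $\mathcal Qu:=\sup_{q\in\mathcal P}(qu+f_q)$ is finite for every $u\in\mathbb R^d$. For $q\in\mathcal P$, $t\ge0$: $S_q(t)u_0:=e^{tq}u_0+\int_0^te^{sq}f_q\,ds$. For $h\ge0$: $\mathcal E_hu_0:=\sup_{q\in\mathcal P}S_q(h)u_0$. $P$ is the set of finite subsets $\pi\subset[0,\infty)$ with $0\in\pi$; $P_t:=\{\pi\in P:\max\pi=t\}$. For $\pi=\{t_0,\dots,t_m\}$ with $0=t_0<\dots<t_m$, $m\ge1$, $\mathcal E_\pi:=\mathcal E_{t_1-t_0}\circ\cdots\circ\mathcal E_{t_m-t_{m-1}}$, and $\mathcal E_{\{0\}}:=\mathcal E_0$. The Nisio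 semigroup of $(\mathcal P,f)$ is $\mathscr S(t)u_0:=\sup_{\pi\in P_t}\mathcal E_\pi u_0$. *)

(* Defs.v *)
From Stdlib Require Import Reals Arith Factorial List Classical ClassicalEpsilon.
Open Scope R_scope.

(* Vectors in R^d are functions nat -> R of which only the components i < d
   matter; d x d matrices are functions nat -> nat -> R. *)
Definition vec := nat -> R.
Definition mat := nat -> nat -> R.

Fixpoint sumd (n : nat) (g : nat -> R) : R :=
  match n with O => 0 | S m => sumd m g + g m end.

Definition mv (d : nat) (q : mat) (u : vec) : vec :=
  fun i => sumd d (fun j => q i j * u j).

Fixpoint mpow (d : nat) (q : mat) (k : nat) (u : vec) : vec :=
  match k with O => u | S k' => mv d q (mpow d q k' u) end.

(* Q-matrix (entries outside the d x d block are required to vanish, so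
   that the representation of a matrix is canonical). *)
Definition Qmatrix (d : nat) (q : mat) : Prop :=
  (forall i j, (d <= i)%nat \/ (d <= j)%nat -> q i j = 0) /\
  (forall i, (i < d)%nat -> q i i <= 0) /\
  (forall i j, (i < d)%nat -> (j < d)%nat -> i <> j -> 0 <= q i j) /\
  (forall i, (i < d)%nat -> sumd d (fun j => q i j) = 0).

(* limit of a real sequence (arbitrary value if it does not converge) *)
Definition lim (a : nat -> R) : R := epsilon (inhabits 0) (fun l => Un_cv a l).

Definition expm (d : nat) (q : mat) (t : R) (u : vec) : vec :=
  fun i => lim (fun N => sum_f_R0 (fun k => t ^ k / INR (fact k) * mpow d q k u i) N).

(* Riemann integral int_a^b g (arbitrary value if g is not integrable) *)
Definition integral (g : R -> R) (a b : R) : R :=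
  epsilon (inhabits 0)
    (fun I => exists pr : Riemann_integrable g a b, RiemannInt pr = I).

Definition Sq (d : nat) (q : mat) (fq : vec) (t : R) (u0 : vec) : vec :=
  fun i => expm d q t u0 i + integral (fun s => expm d q s fq i) 0 t.

(* componentwise supremum of a set of vectors (least upper bound in each
   component; arbitrary value if it does not exist) *)
Definition vsup (A : vec -> Prop) : vec :=
  fun i => epsilon (inhabits 0) (is_lub (fun x => exists v, A v /\ v i = x)).

Definition Eh (d : nat) (P : mat -> Prop) (f : mat -> vec) (h : R) (u0 : vec) : vec :=
  vsup (fun v => exists q, P q /\ v = Sq d q (f q) h u0).

(* A finite set pi = {t_0 < ... < t_m} is represented by the strictly
   increasing list [t_0; ...; t_m]. *)
Fixpoint incr (l : list R) : Prop :=
  match l with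
  | a :: ((b :: _) as r) => a < b /\ incr r
  | _ => True
  end.

Definition partition (t : R) (l : list R) : Prop :=
  (exists r, l = 0 :: r) /\ incr l /\ last l 0 = t.

Fixpoint Epi_aux (d : nat) (P : mat -> Prop) (f : mat -> vec) (l : list R) (u : vec) : vec :=
  match l with
  | t0 :: ((t1 :: _) as r) => Eh d P f (t1 - t0) (Epi_aux d P f r u)
  | _ => u
  end.

Definition Epi (d : nat) (P : mat -> Prop) (f : mat -> vec) (l : list R) (u : vec) : vec :=
  match l with
  | _ :: nil => Eh d P f 0 u
  | _ => Epi_aux d P f l u
  end.

Definition Nisio (d : nat) (P : mat -> Prop) (f : mat -> vec) (t : R) (u0 : vec) : vec :=
  vsup (fun v => exists l, partition t l /\ v = Epi d P f l u0).

Fixpoint iterv (k : nat) (F : vec -> vec) (u : vec) : vec :=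
  match k with O => u | S k' => F (iterv k' F u) end.

(* Main.v *)
From Coquelicot Require Import Coquelicot.
From Stdlib Require Import Reals ZArith Factorial Lra Lia List Classical ClassicalEpsilon FunctionalExtensionality.
Require Import Defs.
Open Scope R_scope.

Lemma sumd_ext n g h : (forall j, (j < n)%nat -> g j = h j) -> sumd n g = sumd n h.
Proof. induction n; simpl; intros H; auto. rewrite IHn by (intros; apply H; lia). rewrite (H n) by lia. auto. Qed.

Lemma sumd_plus n g h : sumd n (fun j => g j + h j) = sumd n g + sumd n h.
Proof. induction n; simpl; [lra|]. rewrite IHn; lra. Qed.

Lemma sumd_scal n c g : sumd n (fun j => c * g j) = c * sumd n g.
Proof. induction n; simpl; [lra|]. rewrite IHn; lra. Qed.

Lemma sumd_minus n g h : sumd n (fun j => g j - h j) = sumd n g - sumd n h.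
Proof. induction n; simpl; [lra|]. rewrite IHn; lra. Qed.

Lemma sumd_zero n : sumd n (fun _ => 0) = 0.
Proof. induction n; simpl; [lra|]. rewrite IHn; lra. Qed.

Lemma sumd_le n g h : (forall j, (j<n)%nat -> g j <= h j) -> sumd n g <= sumd n h.
Proof. induction n; simpl; intros H; [lra|]. assert (H1 := H n ltac:(lia)).
 assert (sumd n g <= sumd n h) by (apply IHn; intros; apply H; lia). lra. Qed.

Lemma sumd_abs n g : Rabs (sumd n g) <= sumd n (fun j => Rabs (g j)).
Proof. induction n; simpl. rewrite Rabs_R0; lra.
 eapply Rle_trans; [apply Rabs_triang|]. lra. Qed.

Lemma sumd_nonneg n g : (forall j, (j<n)%nat -> 0 <= g j) -> 0 <= sumd n g.
Proof. intros H. rewrite <- (sumd_zero n). apply sumd_le; auto. Qed.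

Lemma sumd_ge_term n g k : (forall j, (j<n)%nat -> 0 <= g j) -> (k < n)%nat -> g k <= sumd n g.
Proof. induction n; simpl; intros H Hk; [lia|].
 destruct (Nat.eq_dec k n) as [->|Hne].
 - assert (0 <= sumd n g) by (apply sumd_nonneg; intros; apply H; lia). lra.
 - assert (g k <= sumd n g) by (apply IHn; [intros; apply H; lia | lia]).
   assert (0 <= g n) by (apply H; lia). lra. Qed.

Lemma sumd_delta n c j w : (j < n)%nat ->
  sumd n (fun k => (if Nat.eq_dec j k then c else 0) * w k) = c * w j.
Proof. induction n; simpl; intros Hj; [lia|].
 destruct (Nat.eq_dec j n) as [->|Hne].
 - rewrite (sumd_ext n _ (fun _ => 0)). rewrite sumd_zero; lra.
   intros k Hk. destruct (Nat.eq_dec n k); [lia|]. lra.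
 - rewrite IHn by lia. lra. Qed.

Definition nrm (d : nat) (u : vec) := sumd d (fun j => Rabs (u j)).
Definition Nq (d : nat) (q : mat) := sumd d (fun i => sumd d (fun j => Rabs (q i j))).

Lemma nrm_nonneg d u : 0 <= nrm d u.
Proof. apply sumd_nonneg; intros; apply Rabs_pos. Qed.
Lemma Nq_nonneg d q : 0 <= Nq d q.
Proof. apply sumd_nonneg; intros; apply sumd_nonneg; intros; apply Rabs_pos. Qed.

Lemma coord_le_nrm d u i : (i < d)%nat -> Rabs (u i) <= nrm d u.
Proof. intros; unfold nrm. apply (sumd_ge_term d (fun j => Rabs (u j))); auto. intros; apply Rabs_pos. Qed.

Lemma mv_bound d q u : nrm d (mv d q u) <= Nq d q * nrm d u.
Proof. unfold nrm at 1, Nq, mv. rewrite Rmult_comm, <- sumd_scal.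
 apply sumd_le; intros i Hi. eapply Rle_trans; [apply sumd_abs|].
 rewrite <- sumd_scal. apply sumd_le; intros j Hj. rewrite Rabs_mult.
 rewrite Rmult_comm. apply Rmult_le_compat_r; [apply Rabs_pos|]. apply coord_le_nrm; auto. Qed.

Lemma mpow_bound d q k u : nrm d (mpow d q k u) <= Nq d q ^ k * nrm d u.
Proof. induction k; simpl. lra.
 eapply Rle_trans; [apply mv_bound|]. rewrite Rmult_assoc. apply Rmult_le_compat_l; auto. apply Nq_nonneg. Qed.

Lemma mpow_S_r d q k u : mpow d q k (mv d q u) = mpow d q (S k) u.
Proof. induction k; simpl; auto. simpl in IHk. rewrite IHk. auto. Qed.

Lemma cv0_bounded (s : nat -> R) : Un_cv s 0 -> exists M, forall n, Rabs (s n) <= M.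
Proof. intros H. destruct (H 1 ltac:(lra)) as [N HN].
 exists (1 + sumd N (fun k => Rabs (s k))). intros n.
 assert (0 <= sumd N (fun k => Rabs (s k))) by (apply sumd_nonneg; intros; apply Rabs_pos).
 destruct (Compare_dec.le_lt_dec N n).
 - specialize (HN n ltac:(lia)). unfold R_dist in HN. rewrite Rminus_0_r in HN. lra.
 - assert (Rabs (s n) <= sumd N (fun k => Rabs (s k))) by (apply (sumd_ge_term N (fun k => Rabs (s k))); auto; intros; apply Rabs_pos). lra. Qed.

Definition ac d q u i k := mpow d q k u i / INR (fact k).

Lemma fact_pos k : 0 < INR (fact k).
Proof. apply lt_0_INR. apply lt_O_fact. Qed.

Lemma CV_inf d q u i x : (i < d)%nat -> Rbar_lt (Rabs x) (CV_radius (ac d q u i)).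
Proof. intros Hi. set (r := Rabs x + 1).
 assert (Hr : 0 <= r) by (unfold r; generalize (Rabs_pos x); lra).
 destruct (cv0_bounded _ (cv_speed_pow_fact (Nq d q * r))) as [Mb HMb].
 assert (Hb : Rbar_le r (CV_radius (ac d q u i))).
 { destruct (CV_radius_bounded (ac d q u i)) as [Hub _]. apply Hub.
   exists (nrm d u * Mb). intros n. unfold ac.
   assert (Hf := fact_pos n).
   replace (mpow d q n u i / INR (fact n) * r ^ n) with (mpow d q n u i * (r^n / INR (fact n))) by (field; lra).
   rewrite Rabs_mult. rewrite (Rabs_pos_eq (r^n / INR (fact n))) by (apply Rdiv_le_0_compat; [apply pow_le; auto | lra]).
   specialize (HMb n). rewrite Rabs_pos_eq in HMb by (apply Rdiv_le_0_compat; [apply pow_le; apply Rmult_le_pos; auto; apply Nq_nonneg | lra]).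
   eapply Rle_trans. apply Rmult_le_compat_r. apply Rdiv_le_0_compat; [apply pow_le; auto | lra].
   eapply Rle_trans. apply coord_le_nrm; eauto. apply mpow_bound.
   rewrite Rpow_mult_distr in HMb. 
   replace (Nq d q ^ n * nrm d u * (r ^ n / INR (fact n))) with (nrm d u * (Nq d q ^ n * r ^ n / INR (fact n))) by (field; lra).
   apply Rmult_le_compat_l; auto. apply nrm_nonneg. }
 eapply Rbar_lt_le_trans; [|exact Hb]. simpl. unfold r; lra. Qed.

Lemma lim_unique a l : Un_cv a l -> lim a = l.
Proof. intros H. unfold lim. assert (Hs := epsilon_spec (inhabits 0) (fun l => Un_cv a l) (ex_intro _ l H)).
 eapply UL_sequence; eauto. Qed.

Lemma expm_PS d q t u i : (i < d)%nat -> expm d q t u i = PSeries (ac d q u i) t.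
Proof. intros Hi. unfold expm. apply lim_unique.
 assert (Hex := CV_radius_inside _ _ (CV_inf d q u i t Hi)).
 assert (Hc := PSeries_correct _ _ Hex). unfold is_pseries, is_series in Hc.
 apply is_lim_seq_Reals. unfold is_lim_seq.
 eapply filterlim_ext; [|exact Hc]. intros N. simpl.
 rewrite sum_n_Reals. apply sum_eq. intros k _. unfold ac.
 rewrite pow_n_pow. unfold scal; simpl; unfold mult; simpl.
 assert (Hf := fact_pos k). field. lra. Qed.

Lemma ex_ps d q u i x : (i < d)%nat -> ex_pseries (ac d q u i) x.
Proof. intros Hi. apply CV_radius_inside. apply CV_inf; auto. Qed.

Lemma expm_deriv d q u i x : (i < d)%nat ->
  is_derive (fun s => expm d q s u i) x (expm d q x (mv d q u) i).
Proof. intros Hi. rewrite (expm_PS d q x (mv d q u) i Hi).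
 eapply is_derive_ext. intros s. symmetry. apply expm_PS; auto.
 replace (PSeries (ac d q (mv d q u) i) x) with (PSeries (PS_derive (ac d q u i)) x).
 apply is_derive_PSeries. apply CV_inf; auto.
 apply PSeries_ext. intros n. unfold PS_derive, ac. rewrite mpow_S_r.
 rewrite fact_simpl, mult_INR. assert (Hf := fact_pos n).
 assert (0 < INR (S n)) by (apply lt_0_INR; lia). simpl mpow. field. lra. Qed.

Lemma PS_sumd n (c : nat -> R) (a : nat -> nat -> R) x :
  (forall j, (j < n)%nat -> ex_pseries (a j) x) ->
  ex_pseries (fun k => sumd n (fun j => c j * a j k)) x /\
  sumd n (fun j => c j * PSeries (a j) x) = PSeries (fun k => sumd n (fun j => c j * a j k)) x.
Proof. induction n; intros H; simpl.
 - split. apply (ex_pseries_ext (fun _ => 0)). intros; reflexivity.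
   exists 0. unfold is_pseries, is_series. eapply filterlim_ext; [|apply filterlim_const].
   intros N. simpl. rewrite sum_n_Reals. induction N; simpl. unfold scal; simpl; unfold mult; simpl; ring.
   rewrite <- IHN. unfold scal; simpl; unfold mult; simpl; ring.
   symmetry. apply PSeries_const_0.
 - destruct IHn as [IH1 IH2]. intros; apply H; lia.
   assert (Hs : ex_pseries (PS_scal (c n) (a n)) x). apply ex_pseries_scal.
   unfold mult; simpl; apply Rmult_comm. apply H; lia.
   split.
   + eapply ex_pseries_ext. 2: apply (ex_pseries_plus _ _ _ IH1 Hs). intros k. reflexivity.
   + rewrite IH2. rewrite <- PSeries_scal. rewrite <- PSeries_plus; auto. Qed.

Lemma expm_mv d q t u i : (i < d)%nat -> mv d q (expm d q t u) i = expm d q t (mv d q u) i.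
Proof. intros Hi. unfold mv at 1.
 rewrite (sumd_ext d _ (fun j => q i j * PSeries (ac d q u j) t)).
 2:{ intros j Hj. rewrite expm_PS; auto. }
 destruct (PS_sumd d (fun j => q i j) (fun j => ac d q u j) t) as [_ ->].
 intros; apply ex_ps; auto.
 rewrite expm_PS; auto. apply PSeries_ext. intros k. unfold ac.
 rewrite mpow_S_r. simpl mpow. unfold mv. unfold Rdiv. rewrite (Rmult_comm _ (/ INR (fact k))), <- sumd_scal.
 apply sumd_ext. intros; ring. Qed.

Lemma mpow_lin d q a b u v k i :
  mpow d q k (fun j => a * u j + b * v j) i = a * mpow d q k u i + b * mpow d q k v i.
Proof. revert i; induction k; intros i; simpl; auto. unfold mv.
 rewrite (sumd_ext d _ (fun j => a * (q i j * mpow d q k u j) + b * (q i j * mpow d q k v j))).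
 rewrite sumd_plus, !sumd_scal; auto. intros j _. rewrite IHk. ring. Qed.

Lemma expm_lin d q t a b u v i : (i < d)%nat ->
  expm d q t (fun j => a * u j + b * v j) i = a * expm d q t u i + b * expm d q t v i.
Proof. intros Hi. rewrite !expm_PS; auto.
 rewrite <- !PSeries_scal. rewrite <- PSeries_plus.
 apply PSeries_ext. intros k. unfold PS_plus, PS_scal, ac. rewrite mpow_lin.
 unfold plus, scal; simpl; unfold mult; simpl. field. generalize (fact_pos k); lra.
 apply ex_pseries_scal. unfold mult; simpl; apply Rmult_comm. apply ex_ps; auto.
 apply ex_pseries_scal. unfold mult; simpl; apply Rmult_comm. apply ex_ps; auto. Qed.

Lemma expm_0 d q u i : (i < d)%nat -> expm d q 0 u i = u i.
Proof. intros Hi. rewrite expm_PS; auto. rewrite PSeries_0. unfold ac. simpl. field. Qed.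

Lemma mpow_coords d q u v k i : (forall j, (j < d)%nat -> u j = v j) -> (i < d)%nat ->
  mpow d q k u i = mpow d q k v i.
Proof. intros H. revert i. induction k; intros i Hi; simpl; auto.
 unfold mv. apply sumd_ext. intros j Hj. rewrite IHk; auto. Qed.

Lemma expm_coords d q t u v i : (forall j, (j < d)%nat -> u j = v j) -> (i < d)%nat ->
  expm d q t u i = expm d q t v i.
Proof. intros H Hi. rewrite !expm_PS; auto. apply PSeries_ext. intros k; unfold ac.
 rewrite (mpow_coords d q u v); auto. Qed.

Lemma mpow_nonneg d q u k i : (forall a b, (a < d)%nat -> (b < d)%nat -> 0 <= q a b) ->
  (forall j, (j < d)%nat -> 0 <= u j) -> (i < d)%nat -> 0 <= mpow d q k u i.
Proof. intros Hq Hu. revert i. induction k; intros i Hi; simpl; auto.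
 unfold mv. apply sumd_nonneg. intros j Hj. apply Rmult_le_pos; auto. Qed.

Lemma expm_nonneg d q t u i : (forall a b, (a < d)%nat -> (b < d)%nat -> 0 <= q a b) ->
  (forall j, (j < d)%nat -> 0 <= u j) -> (i < d)%nat -> 0 <= t -> 0 <= expm d q t u i.
Proof. intros Hq Hu Hi Ht. unfold expm. 
 assert (Hc : Un_cv (fun N => sum_f_R0 (fun k => t ^ k / INR (fact k) * mpow d q k u i) N) (expm d q t u i)).
 { rewrite expm_PS; auto. assert (Hex := ex_ps d q u i t Hi).
   assert (Hc := PSeries_correct _ _ Hex). unfold is_pseries, is_series in Hc.
   apply is_lim_seq_Reals. unfold is_lim_seq.
   eapply filterlim_ext; [|exact Hc]. intros N. simpl.
   rewrite sum_n_Reals. apply sum_eq. intros k _. unfold ac.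
   rewrite pow_n_pow. unfold scal; simpl; unfold mult; simpl.
   assert (Hf := fact_pos k). field. lra. }
 rewrite (lim_unique _ _ Hc). apply is_lim_seq_Reals in Hc.
 assert (Hp : forall n, 0 <= sum_f_R0 (fun k => t ^ k / INR (fact k) * mpow d q k u i) n).
 { intros n; apply cond_pos_sum; intros k; apply Rmult_le_pos; [apply Rdiv_le_0_compat; [apply pow_le; auto| apply fact_pos] | apply mpow_nonneg; auto]. }
 assert (H0 := is_lim_seq_le (fun _ => 0) _ 0 _ Hp (is_lim_seq_const 0) Hc).
 simpl in H0. exact H0. Qed.

Lemma isd_plus (f g : R -> R) x df dg : is_derive f x df -> is_derive g x dg -> is_derive (fun y => f y + g y) x (df + dg).
Proof. intros. exact (is_derive_plus f g x df dg H H0). Qed.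
Lemma isd_minus (f g : R -> R) x df dg : is_derive f x df -> is_derive g x dg -> is_derive (fun y => f y - g y) x (df - dg).
Proof. intros. exact (is_derive_minus f g x df dg H H0). Qed.
Lemma isd_mult (f g : R -> R) x df dg : is_derive f x df -> is_derive g x dg -> is_derive (fun y => f y * g y) x (df * g x + f x * dg).
Proof. intros. exact (is_derive_mult f g x df dg H H0 Rmult_comm). Qed.
Lemma isd_const (c x : R) : is_derive (fun _ => c) x 0.
Proof. exact (is_derive_const c x). Qed.
Lemma isd_id (x : R) : is_derive (fun y => y) x 1.
Proof. exact (is_derive_id x). Qed.
Lemma isd_ext (f g : R -> R) x l l' : (forall y, f y = g y) -> l = l' -> is_derive f x l -> is_derive g x l'.
Proof. intros H -> H'. eapply is_derive_ext; eauto. Qed.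

Lemma isd_cont (f : R -> R) x l : is_derive f x l -> continuity_pt f x.
Proof. intros H. apply continuity_pt_filterlim. apply (ex_derive_continuous f x). exists l; auto. Qed.

Lemma incr_le (F dF : R -> R) a b L : a <= b ->
  (forall x, a <= x <= b -> is_derive F x (dF x)) -> (forall x, a <= x <= b -> dF x <= L) ->
  F b - F a <= L * (b - a).
Proof. intros Hab Hd HL.
 destruct (MVT_gen F a b dF) as [c [Hc Heq]].
 - intros x Hx. rewrite Rmin_left, Rmax_right in Hx by lra. apply Hd; lra.
 - intros x Hx. rewrite Rmin_left, Rmax_right in Hx by lra. eapply isd_cont; apply Hd; lra.
 - rewrite Rmin_left, Rmax_right in Hc by lra. rewrite Heq. apply Rmult_le_compat_r; [lra|]. apply HL; lra. Qed.

Lemma incr_ge (F dF : R -> R) a b L : a <= b ->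
  (forall x, a <= x <= b -> is_derive F x (dF x)) -> (forall x, a <= x <= b -> L <= dF x) ->
  L * (b - a) <= F b - F a.
Proof. intros Hab Hd HL.
 destruct (MVT_gen F a b dF) as [c [Hc Heq]].
 - intros x Hx. rewrite Rmin_left, Rmax_right in Hx by lra. apply Hd; lra.
 - intros x Hx. rewrite Rmin_left, Rmax_right in Hx by lra. eapply isd_cont; apply Hd; lra.
 - rewrite Rmin_left, Rmax_right in Hc by lra. rewrite Heq. apply Rmult_le_compat_r; [lra|]. apply HL; lra. Qed.

Lemma deriv_E n (g : R -> vec) (dg : vec) s :
  (forall i, (i < n)%nat -> is_derive (fun s => g s i) s (dg i)) ->
  is_derive (fun s => sumd n (fun i => g s i * g s i)) s (sumd n (fun i => 2 * g s i * dg i)).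
Proof. induction n; intros H; simpl.
 - apply isd_const.
 - eapply isd_ext; [intros; reflexivity | | apply isd_plus; [apply IHn; intros; apply H; lia | apply isd_mult; apply H; lia]].
   simpl. ring. Qed.

Lemma quad_bound q a b E : a * a <= E -> b * b <= E -> 2 * (q * a * b) <= Rabs q * (2 * E).
Proof. intros Ha Hb. destruct (Rle_dec 0 q).
 - rewrite Rabs_pos_eq by lra. assert (0 <= q * ((a-b)*(a-b))) by (apply Rmult_le_pos; [lra|apply Rle_0_sqr]).
   assert (q * (a*a) <= q * E) by (apply Rmult_le_compat_l; lra).
   assert (q * (b*b) <= q * E) by (apply Rmult_le_compat_l; lra). nra.
 - rewrite Rabs_left by lra. assert (0 <= -q * ((a+b)*(a+b))) by (apply Rmult_le_pos; [lra|apply Rle_0_sqr]).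
   assert (-q * (a*a) <= -q * E) by (apply Rmult_le_compat_l; lra).
   assert (-q * (b*b) <= -q * E) by (apply Rmult_le_compat_l; lra). nra. Qed.

Lemma ode_unique d q (g : R -> vec) :
  (forall s i, (i < d)%nat -> is_derive (fun s => g s i) s (mv d q (g s) i)) ->
  (forall i, (i < d)%nat -> g 0 i = 0) ->
  forall s, 0 <= s -> forall i, (i < d)%nat -> g s i = 0.
Proof. intros Hd H0 s Hs i Hi.
 set (K := 2 * Nq d q).
 set (E := fun s => sumd d (fun i => g s i * g s i)).
 set (phi := fun s => E s * exp (- (K * s))).
 set (dphi := fun s => (sumd d (fun i => 2 * g s i * mv d q (g s) i) - K * E s) * exp (-(K*s))).
 assert (HdE : forall x, is_derive E x (sumd d (fun i => 2 * g x i * mv d q (g x) i))).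
 { intros x. apply deriv_E. intros; apply Hd; auto. }
 assert (Hdphi : forall x, is_derive phi x (dphi x)).
 { intros x. unfold phi, dphi. eapply isd_ext; [intros; reflexivity| |].
   2:{ apply isd_mult. apply HdE.
       assert (Hc := is_derive_comp exp (fun y => - (K * y)) x (exp (- (K*x))) (-(K * 1))).
       apply Hc. apply is_derive_exp.
       eapply isd_ext; [intros; reflexivity| |]. 2:{ apply (is_derive_opp (fun y => K * y)). apply is_derive_scal. apply isd_id. } reflexivity. }
   unfold scal; simpl; unfold mult; simpl. ring. }
 assert (HEn : forall x, 0 <= E x).
 { intros x. apply sumd_nonneg. intros; apply Rle_0_sqr. }
 assert (Hle : forall x, dphi x <= 0).
 { intros x. unfold dphi. apply Rmult_le_0_r; [|apply Rlt_le, exp_pos].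
   apply Rle_minus. unfold mv. 
   assert (Hsq : forall j, (j < d)%nat -> g x j * g x j <= E x).
   { intros j Hj. apply (sumd_ge_term d (fun i => g x i * g x i)); auto. intros; apply Rle_0_sqr. }
   assert (HK : K * E x = sumd d (fun a => sumd d (fun b => Rabs (q a b) * (2 * E x)))).
   { unfold K, Nq. symmetry. rewrite (sumd_ext d (fun a => sumd d (fun b => Rabs (q a b) * (2 * E x))) (fun a => (2 * E x) * sumd d (fun b => Rabs (q a b)))).
     rewrite sumd_scal. ring. intros a _. rewrite <- sumd_scal. apply sumd_ext; intros; ring. }
   rewrite HK. apply sumd_le. intros a Ha.
   rewrite Rmult_assoc, <- sumd_scal. rewrite <- sumd_scal.
   apply sumd_le. intros b Hb.
   assert (Hq := quad_bound (q a b) (g x a) (g x b) (E x) (Hsq a Ha) (Hsq b Hb)).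
   lra. }
 assert (Hp := incr_le phi dphi 0 s 0 Hs (fun x _ => Hdphi x) (fun x _ => Hle x)).
 assert (Hphi0 : phi 0 = 0).
 { unfold phi, E. rewrite (sumd_ext d _ (fun _ => 0)). rewrite sumd_zero; ring.
   intros j Hj. rewrite H0; auto; ring. }
 assert (HEs : E s = 0).
 { assert (phi s <= 0) by lra. unfold phi in H.
   assert (Hx := exp_pos (-(K*s))). assert (HE := HEn s). nra. }
 assert (Hsq : g s i * g s i <= E s).
 { apply (sumd_ge_term d (fun i => g s i * g s i)); auto. intros; apply Rle_0_sqr. }
 nra. Qed.

Lemma mv_lin d q a b x y i : mv d q (fun j => a * x j + b * y j) i = a * mv d q x i + b * mv d q y i.
Proof. unfold mv. rewrite <- !sumd_scal, <- sumd_plus. apply sumd_ext; intros; ring. Qed.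

Lemma mv_coords d q x y i : (forall j, (j < d)%nat -> x j = y j) -> mv d q x i = mv d q y i.
Proof. intros H. unfold mv. apply sumd_ext. intros j Hj. rewrite H; auto. Qed.

Definition cQ d (q : mat) := sumd d (fun i => Rabs (q i i)).
Definition Bm d (q : mat) : mat := fun i j => q i j + (if Nat.eq_dec i j then cQ d q else 0).

Lemma Bm_nonneg d q : Qmatrix d q -> forall a b, (a < d)%nat -> (b < d)%nat -> 0 <= Bm d q a b.
Proof. intros [_ [Hd [Ho _]]] a b Ha Hb. unfold Bm. destruct (Nat.eq_dec a b) as [<-|Hne].
 - assert (Rabs (q a a) <= cQ d q) by (apply (sumd_ge_term d (fun i => Rabs (q i i))); auto; intros; apply Rabs_pos).
   assert (- q a a <= Rabs (q a a)) by (rewrite <- Rabs_Ropp; apply Rle_abs). lra.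
 - assert (0 <= q a b) by (apply Ho; auto). lra. Qed.

Lemma mv_Bm d q w j : (j < d)%nat -> mv d (Bm d q) w j = mv d q w j + cQ d q * w j.
Proof. intros Hj. unfold mv, Bm. rewrite <- sumd_delta with (n := d) (j := j) by auto.
 rewrite <- sumd_plus. apply sumd_ext; intros; ring. Qed.

Lemma expm_Bm d q t v j : (j < d)%nat -> 0 <= t ->
  expm d q t v j = exp (- (cQ d q * t)) * expm d (Bm d q) t v j.
Proof. intros Hj Ht. set (c := cQ d q).
 set (g := fun t j => exp (- (c * t)) * expm d (Bm d q) t v j - expm d q t v j).
 assert (H := ode_unique d q g). 
 assert (Hg : g t j = 0). 2:{ unfold g in Hg. lra. }
 apply H; auto.
 - intros s i Hi. unfold g.
   eapply isd_ext; [intros; reflexivity| | apply isd_minus; [apply isd_mult|apply expm_deriv; auto]].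
   3:{ apply expm_deriv; auto. }
   2:{ assert (Hc := is_derive_comp exp (fun y => - (c * y)) s (exp (- (c*s))) (-(c * 1))).
       apply Hc. apply is_derive_exp.
       eapply isd_ext; [intros; reflexivity| |]. 2:{ apply (is_derive_opp (fun y => c * y)). apply is_derive_scal. apply isd_id. } reflexivity. }
   unfold scal; simpl; unfold mult; simpl.
   rewrite <- !expm_mv by auto. rewrite mv_Bm by auto.
   rewrite (mv_coords d q (fun j0 => exp (- (c * s)) * expm d (Bm d q) s v j0 - expm d q s v j0)
              (fun j0 => exp (- (c * s)) * expm d (Bm d q) s v j0 + (-1) * expm d q s v j0)).
   rewrite mv_lin. fold c. ring. intros; ring.
 - intros i Hi. unfold g. rewrite !expm_0 by auto. rewrite Rmult_0_r, Ropp_0, exp_0. ring. Qed.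

Lemma expm_pos d q t v i : Qmatrix d q -> 0 <= t -> (forall j, (j < d)%nat -> 0 <= v j) -> (i < d)%nat ->
  0 <= expm d q t v i.
Proof. intros Hq Ht Hv Hi. rewrite expm_Bm by auto. apply Rmult_le_pos. apply Rlt_le, exp_pos.
 apply expm_nonneg; auto. apply Bm_nonneg; auto. Qed.

Lemma mpow_const d q c k i : Qmatrix d q -> (i < d)%nat -> mpow d q (S k) (fun _ => c) i = 0.
Proof. intros Hq. revert i. induction k; intros i Hi.
 - simpl. unfold mv. destruct Hq as [_ [_ [_ Hs]]]. rewrite (sumd_ext d _ (fun j => c * q i j)) by (intros; ring).
   rewrite sumd_scal, Hs; auto; ring.
 - change (mv d q (mpow d q (S k) (fun _ => c)) i = 0). unfold mv at 1.
   rewrite (sumd_ext d _ (fun _ => 0)). apply sumd_zero.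
   intros j Hj. rewrite IHk; auto; ring. Qed.

Lemma expm_const d q t c i : Qmatrix d q -> (i < d)%nat -> expm d q t (fun _ => c) i = c.
Proof. intros Hq Hi. rewrite expm_PS; auto. rewrite PSeries_decr_1 by (apply ex_ps; auto).
 rewrite (PSeries_ext _ (fun _ => 0)). rewrite PSeries_const_0. unfold ac; simpl; field.
 intros n. unfold PS_decr_1, ac. rewrite mpow_const; auto. unfold Rdiv; ring. Qed.

Lemma expm_mono d q t u v i : Qmatrix d q -> 0 <= t -> (forall j, (j < d)%nat -> u j <= v j) -> (i < d)%nat ->
  expm d q t u i <= expm d q t v i.
Proof. intros Hq Ht Huv Hi.
 assert (H := expm_pos d q t (fun j => 1 * v j + (-1) * u j) i Hq Ht ltac:(intros j Hj; specialize (Huv j Hj); lra) Hi).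
 rewrite expm_lin in H by auto. lra. Qed.

Lemma expm_le_const d q t u M i : Qmatrix d q -> 0 <= t -> (forall j, (j < d)%nat -> u j <= M) -> (i < d)%nat ->
  expm d q t u i <= M.
Proof. intros. rewrite <- (expm_const d q t M i) by auto. apply expm_mono; auto. Qed.

Lemma expm_ge_const d q t u M i : Qmatrix d q -> 0 <= t -> (forall j, (j < d)%nat -> M <= u j) -> (i < d)%nat ->
  M <= expm d q t u i.
Proof. intros. rewrite <- (expm_const d q t M i) by auto. apply expm_mono; auto. Qed.

Lemma integral_RInt (g : R -> R) a b : (forall x, continuous g x) -> integral g a b = RInt g a b.
Proof. intros Hc. assert (Hex : ex_RInt g a b) by (apply (ex_RInt_continuous (V:=R_CompleteNormedModule)); intros; apply Hc).
 assert (pr0 := ex_RInt_Reals_0 _ _ _ Hex).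
 unfold integral.
 destruct (epsilon_spec (inhabits 0) (fun I => exists pr : Riemann_integrable g a b, RiemannInt pr = I)
   (ex_intro _ (RiemannInt pr0) (ex_intro _ pr0 eq_refl))) as [pr Hpr].
 rewrite <- Hpr. symmetry. apply RInt_Reals. Qed.

Lemma expm_cont d q v i x : (i < d)%nat -> continuous (fun s => expm d q s v i) x.
Proof. intros Hi. apply (ex_derive_continuous (fun s => expm d q s v i)). eexists; apply expm_deriv; auto. Qed.

Lemma Sq_RInt d q fq h u i : (i < d)%nat ->
  Sq d q fq h u i = expm d q h u i + RInt (fun s => expm d q s fq i) 0 h.
Proof. intros Hi. unfold Sq. rewrite integral_RInt; auto. intros; apply expm_cont; auto. Qed.

Lemma Sq_0 d q fq u i : (i < d)%nat -> Sq d q fq 0 u i = u i.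
Proof. intros Hi. rewrite Sq_RInt, expm_0, RInt_point by auto. unfold zero; simpl. ring. Qed.

Lemma Sq_deriv1 d q fq u i x : (i < d)%nat ->
  is_derive (fun h => Sq d q fq h u i) x (expm d q x (mv d q u) i + expm d q x fq i).
Proof. intros Hi. eapply is_derive_ext. intros h; symmetry; apply Sq_RInt; auto.
 apply isd_plus. apply expm_deriv; auto.
 apply (is_derive_RInt (fun s => expm d q s fq i) (RInt (fun s => expm d q s fq i) 0) 0 x).
 apply filter_forall. intros b. apply (RInt_correct (V:=R_CompleteNormedModule)). apply (ex_RInt_continuous (V:=R_CompleteNormedModule)).
 intros; apply expm_cont; auto. apply expm_cont; auto. Qed.

Lemma is_derive_mv d q (g : R -> vec) (dg : vec) x i :
  (forall j, (j < d)%nat -> is_derive (fun s => g s j) x (dg j)) ->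
  is_derive (fun s => mv d q (g s) i) x (mv d q dg i).
Proof. intros H. unfold mv.
 assert (forall n, (n <= d)%nat -> is_derive (fun s => sumd n (fun j => q i j * g s j)) x (sumd n (fun j => q i j * dg j))).
 { induction n; intros Hn; simpl. apply isd_const. apply isd_plus. apply IHn; lia.
   apply is_derive_scal. apply H; lia. }
 apply H0; auto. Qed.

Lemma deriv0_const (F : R -> R) a b : a <= b -> (forall x, is_derive F x 0) -> F b = F a.
Proof. intros Hab Hd. assert (H1 := incr_le F (fun _ => 0) a b 0 Hab (fun x _ => Hd x) (fun _ _ => Rle_refl 0)).
 assert (H2 := incr_ge F (fun _ => 0) a b 0 Hab (fun x _ => Hd x) (fun _ _ => Rle_refl 0)). lra. Qed.

Lemma Sq_deriv2 d q fq u i h : (i < d)%nat ->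
  mv d q (fun j => Sq d q fq h u j) i + fq i = expm d q h (mv d q u) i + expm d q h fq i.
Proof. intros Hi.
 set (H := fun h => mv d q (fun j => Sq d q fq h u j) i + fq i - expm d q h (mv d q u) i - expm d q h fq i).
 assert (HH : H h = H 0).
 { assert (Hd0 : forall x, is_derive H x 0). 2:{ destruct (Rle_dec 0 h). apply deriv0_const; auto. symmetry; apply deriv0_const; auto; lra. }
   intros x. unfold H.
   assert (D1 := is_derive_mv d q (fun s => fun j => Sq d q fq s u j) (fun j => expm d q x (mv d q u) j + expm d q x fq j) x i
      ltac:(intros j Hj; apply Sq_deriv1; auto)).
   assert (D2 := expm_deriv d q (mv d q u) i x Hi).
   assert (D3 := expm_deriv d q fq i x Hi).
   assert (D := isd_minus _ _ _ _ _ (isd_minus _ _ _ _ _ (isd_plus _ _ _ _ _ D1 (isd_const (fq i) x)) D2) D3).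
   eapply isd_ext; [intros; reflexivity| |exact D].
   rewrite (mv_coords d q (fun j => expm d q x (mv d q u) j + expm d q x fq j)
      (fun j => 1 * expm d q x (mv d q u) j + 1 * expm d q x fq j)).
   rewrite mv_lin, !expm_mv by auto. change (@eq R (1 * expm d q x (mv d q (mv d q u)) i + 1 * expm d q x (mv d q fq) i + 0 - expm d q x (mv d q (mv d q u)) i - expm d q x (mv d q fq) i) 0). ring. intros; ring. }
 unfold H in HH. rewrite !expm_0 in HH by auto.
 rewrite (mv_coords d q (fun j => Sq d q fq 0 u j) u) in HH by (intros; apply Sq_0; auto).
 lra. Qed.

Lemma Sq_deriv d q fq u i x : (i < d)%nat ->
  is_derive (fun h => Sq d q fq h u i) x (mv d q (fun j => Sq d q fq x u j) i + fq i).
Proof. intros Hi. rewrite Sq_deriv2 by auto. apply Sq_deriv1; auto. Qed.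


Lemma Sq_semigroup d q fq h k u i : 0 <= k -> (i < d)%nat ->
  Sq d q fq (h + k) u i = Sq d q fq k (fun j => Sq d q fq h u j) i.
Proof. intros Hk Hi.
 set (G := fun k j => Sq d q fq (h + k) u j - Sq d q fq k (fun j => Sq d q fq h u j) j).
 assert (HG : G k i = 0). 2:{ unfold G in HG. lra. }
 apply (ode_unique d q G); auto.
 - intros s j Hj. unfold G.
   assert (D1 : is_derive (fun s => Sq d q fq (h + s) u j) s (mv d q (fun j => Sq d q fq (h+s) u j) j + fq j)).
   { assert (Hc := is_derive_comp (fun y => Sq d q fq y u j) (fun y => h + y) s _ 1 (Sq_deriv d q fq u j (h+s) Hj)).
     eapply isd_ext; [intros; reflexivity| |apply Hc].
     unfold scal; simpl; unfold mult; simpl. ring.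
     eapply isd_ext; [intros; reflexivity| |apply isd_plus; [apply isd_const|apply isd_id]]. 
     change (@eq R (0 + 1) 1). ring. }
   assert (D2 := Sq_deriv d q fq (fun j => Sq d q fq h u j) j s Hj).
   eapply isd_ext; [intros; reflexivity| |apply isd_minus; [exact D1|exact D2]].
   rewrite (mv_coords d q (fun j => Sq d q fq (h + s) u j - Sq d q fq s (fun j0 => Sq d q fq h u j0) j)
      (fun j => 1 * Sq d q fq (h + s) u j + (-1) * Sq d q fq s (fun j0 => Sq d q fq h u j0) j)).
   rewrite mv_lin. change (@eq R (mv d q (fun j0 => Sq d q fq (h + s) u j0) j + fq j -
      (mv d q (fun j0 => Sq d q fq s (fun j1 => Sq d q fq h u j1) j0) j + fq j))
      (1 * mv d q (fun j0 => Sq d q fq (h + s) u j0) j + -1 * mv d q (fun j0 => Sq d q fq s (fun j1 => Sq d q fq h u j1) j0) j)). ring.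
   intros; ring.
 - intros j Hj. unfold G. rewrite Rplus_0_r, Sq_0 by auto. ring. Qed.

Lemma Sq_le_M d q fq h u M i : Qmatrix d q -> (forall j, (j < d)%nat -> fq j <= 0) -> 0 <= h ->
  (forall j, (j < d)%nat -> u j <= M) -> (i < d)%nat -> Sq d q fq h u i <= M.
Proof. intros Hq Hf Hh Hu Hi. rewrite Sq_RInt by auto.
 assert (expm d q h u i <= M) by (apply expm_le_const; auto).
 assert (RInt (fun s => expm d q s fq i) 0 h <= RInt (fun _ => 0) 0 h).
 { apply RInt_le; auto. apply (ex_RInt_continuous (V:=R_CompleteNormedModule)). intros; apply expm_cont; auto.
   apply (ex_RInt_continuous (V:=R_CompleteNormedModule)). intros; apply continuous_const.
   intros x Hx. apply expm_le_const; auto. lra. }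
 rewrite RInt_const in H0. unfold scal in H0; simpl in H0; unfold mult in H0; simpl in H0. lra. Qed.

Lemma Sq_ge_m d q fq h u m i : Qmatrix d q -> (forall j, (j < d)%nat -> fq j = 0) -> 0 <= h ->
  (forall j, (j < d)%nat -> m <= u j) -> (i < d)%nat -> m <= Sq d q fq h u i.
Proof. intros Hq Hf Hh Hu Hi. rewrite Sq_RInt by auto.
 assert (m <= expm d q h u i) by (apply expm_ge_const; auto).
 rewrite (RInt_ext _ (fun _ => 0)). rewrite RInt_const. unfold scal; simpl; unfold mult; simpl. lra.
 intros x _. rewrite (expm_coords d q x fq (fun _ => 0)) by auto. apply expm_const; auto. Qed.

Lemma Sq_shift d q fq h u v c i : Qmatrix d q -> 0 <= h ->
  (forall j, (j < d)%nat -> u j <= v j + c) -> (i < d)%nat -> Sq d q fq h u i <= Sq d q fq h v i + c.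
Proof. intros Hq Hh Huv Hi. unfold Sq.
 assert (expm d q h u i <= expm d q h (fun j => 1 * v j + c * 1) i).
 { apply expm_mono; auto. intros j Hj. specialize (Huv j Hj). lra. }
 rewrite expm_lin, (expm_const d q h 1 i) in H by auto. lra. Qed.

Lemma Sq_drift_up d q fq h u L i : Qmatrix d q -> 0 <= h ->
  (forall j, (j < d)%nat -> mv d q u j + fq j <= L) -> (i < d)%nat -> Sq d q fq h u i <= u i + h * L.
Proof. intros Hq Hh HL Hi.
 assert (H := incr_le (fun s => Sq d q fq s u i) (fun x => expm d q x (mv d q u) i + expm d q x fq i) 0 h L Hh
   (fun x _ => Sq_deriv1 d q fq u i x Hi)).
 cbv beta in H. rewrite Sq_0 in H by auto.
 assert (Sq d q fq h u i - u i <= L * (h - 0)). 2: lra.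
 apply H. intros x Hx.
 rewrite <- (Rmult_1_l (expm d q x (mv d q u) i)), <- (Rmult_1_l (expm d q x fq i)), <- expm_lin by auto.
 apply expm_le_const; auto. lra. intros j Hj. specialize (HL j Hj). lra. Qed.

Lemma Sq_drift_down d q fq h u L i : Qmatrix d q -> 0 <= h ->
  (forall j, (j < d)%nat -> - L <= mv d q u j + fq j) -> (i < d)%nat -> u i - h * L <= Sq d q fq h u i.
Proof. intros Hq Hh HL Hi.
 assert (H := incr_ge (fun s => Sq d q fq s u i) (fun x => expm d q x (mv d q u) i + expm d q x fq i) 0 h (-L) Hh
   (fun x _ => Sq_deriv1 d q fq u i x Hi)).
 cbv beta in H. rewrite Sq_0 in H by auto.
 assert (-L * (h - 0) <= Sq d q fq h u i - u i). 2: lra.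
 apply H. intros x Hx.
 rewrite <- (Rmult_1_l (expm d q x (mv d q u) i)), <- (Rmult_1_l (expm d q x fq i)), <- expm_lin by auto.
 apply expm_ge_const; auto. lra. intros j Hj. specialize (HL j Hj). lra. Qed.

Lemma Qrow_bound d q u M i : Qmatrix d q -> (forall j, (j < d)%nat -> Rabs (u j) <= M) -> (i < d)%nat ->
  mv d q u i <= - (2 * M) * q i i.
Proof. intros [_ [Hd [Ho Hs]]] Hu Hi.
 assert (E : mv d q u i = sumd d (fun j => q i j * (u j - u i))).
 { unfold mv. rewrite (sumd_ext d (fun j => q i j * (u j - u i)) (fun j => q i j * u j + (- u i) * q i j)) by (intros; ring).
   rewrite sumd_plus, sumd_scal, Hs by auto. ring. }
 rewrite E.
 assert (sumd d (fun j => q i j * (u j - u i)) <= sumd d (fun j => (2 * M) * q i j + (if Nat.eq_dec i j then - (2*M) * q i i else 0) * 1)).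
 { apply sumd_le. intros j Hj. destruct (Nat.eq_dec i j) as [<-|Hne]. ring_simplify. lra.
   assert (0 <= q i j) by (apply Ho; auto). 
   assert (Hij : u j - u i <= 2 * M).
   { assert (H1 := Hu j Hj). assert (H2 := Hu i Hi). apply Rabs_le_between in H1. apply Rabs_le_between in H2. lra. }
   assert (q i j * (u j - u i) <= q i j * (2 * M)) by (apply Rmult_le_compat_l; auto). lra. }
 rewrite sumd_plus, sumd_scal, Hs, sumd_delta in H by auto. lra. Qed.

Fixpoint diffs (l : list R) : list R :=
  match l with
  | a :: ((b :: _) as r) => (b - a) :: diffs r
  | _ => nil
  end.

Lemma incr_diffs l : incr l -> Forall (fun h => 0 < h) (diffs l).
Proof. induction l as [|a l IH]; simpl; auto. destruct l as [|b l]; auto.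
 intros [H1 H2]. constructor. lra. apply IH; auto. Qed.

Lemma last_cons_cons (a b : R) r : last (a :: b :: r) 0 = last (b :: r) 0.
Proof. reflexivity. Qed.

Lemma sum_diffs a r : fold_right Rplus 0 (diffs (a :: r)) = last (a :: r) 0 - a.
Proof. revert a. induction r as [|b r IH]; intros a. simpl; ring.
 change (diffs (a :: b :: r)) with ((b - a) :: diffs (b :: r)).
 rewrite last_cons_cons. change (fold_right Rplus 0 ((b - a) :: diffs (b :: r))) with ((b-a) + fold_right Rplus 0 (diffs (b :: r))). rewrite IH. ring. Qed.

Lemma last_gt a b r : incr (a :: b :: r) -> a < last (a :: b :: r) 0.
Proof. revert a b. induction r as [|c r IH]; intros a b H.
 - simpl in *. tauto.
 - destruct H as [H1 H2]. rewrite last_cons_cons. specialize (IH b c H2). lra. Qed.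

Lemma arch_nat r : exists n : nat, r < INR n.
Proof. destruct (archimed r) as [H1 _]. destruct (ZArith_dec.Z_lt_le_dec (up r) 0) as [Hz|Hz].
 - exists 0%nat. simpl. apply IZR_lt in Hz. lra.
 - exists (Z.to_nat (up r)). rewrite INR_IZR_INZ, Z2Nat.id; auto. Qed.

Lemma pow2_ge n : INR n + 1 <= 2 ^ n.
Proof. induction n. simpl; lra. rewrite S_INR. simpl. generalize (pos_INR n); lra. Qed.

Lemma small_pow2 K eps : 0 <= K -> 0 < eps -> exists N0, forall n, (N0 <= n)%nat -> K / 2 ^ n < eps.
Proof. intros HK He. destruct (arch_nat (K / eps)) as [N0 HN]. exists N0. intros n Hn.
 assert (Hle : INR N0 <= INR n) by (apply le_INR; auto).
 assert (H2 := pow2_ge n). assert (Hp : 0 < 2 ^ n) by (apply pow_lt; lra).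
 apply (Rmult_lt_reg_r (2 ^ n)); auto. unfold Rdiv. rewrite Rmult_assoc, Rinv_l by lra. rewrite Rmult_1_r.
 assert (K < eps * INR N0).
 { apply (Rmult_lt_reg_r (/ eps)). apply Rinv_0_lt_compat; auto.
   replace (eps * INR N0 * / eps) with (INR N0) by (field; lra). exact HN. }
 nra. Qed.

Definition ul (n : nat) (del : R) : list R := map (fun k => INR k * del) (seq 0 (S n)).

Lemma ul_gen (g : nat -> R) (del : R) n k : (forall j, g (S j) - g j = del) ->
  diffs (map g (seq k (S n))) = repeat del n.
Proof. intros Hg. revert k. induction n; intros k. reflexivity.
 change (seq k (S (S n))) with (k :: seq (S k) (S n)).
 change (seq (S k) (S n)) with (S k :: seq (S (S k)) n). simpl map.
 change (diffs (g k :: g (S k) :: map g (seq (S (S k)) n))) with ((g (S k) - g k) :: diffs (g (S k) :: map g (seq (S (S k)) n))).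
 rewrite Hg. change (repeat del (S n)) with (del :: repeat del n). f_equal. apply (IHn (S k)). Qed.

Lemma ul_incr (g : nat -> R) n k : (forall j, g j < g (S j)) -> incr (map g (seq k (S n))).
Proof. intros Hg. revert k. induction n; intros k. simpl; auto.
 change (seq k (S (S n))) with (k :: seq (S k) (S n)).
 specialize (IHn (S k)). change (seq (S k) (S n)) with (S k :: seq (S (S k)) n) in *.
 simpl map in *. split; auto. Qed.

Lemma ul_last (g : nat -> R) n k : last (map g (seq k (S n))) 0 = g (k + n)%nat.
Proof. revert k. induction n; intros k. simpl. f_equal; lia.
 change (seq k (S (S n))) with (k :: seq (S k) (S n)).
 change (seq (S k) (S n)) with (S k :: seq (S (S k)) n).
 simpl map. rewrite last_cons_cons.
 change (S k :: seq (S (S k)) n) with (seq (S k) (S n)).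
 replace (k + S n)%nat with (S k + n)%nat by lia.
 change (last (g (S k) :: map g (seq (S (S k)) n)) 0) with (last (map g (seq (S k) (S n))) 0).
 apply IHn. Qed.

Lemma vsup_lub (A : vec -> Prop) i :
  (exists v, A v) -> (exists B, forall v, A v -> v i <= B) ->
  is_lub (fun x => exists v, A v /\ v i = x) (vsup A i).
Proof. intros [v0 Hv0] [B HB]. unfold vsup.
 apply epsilon_spec. destruct (completeness (fun x => exists v, A v /\ v i = x)) as [m Hm].
 - exists B. intros x [v [Hv <-]]. apply HB; auto.
 - exists (v0 i). exists v0; auto.
 - exists m; auto. Qed.

Definition bnd d M (u : vec) := forall j, (j < d)%nat -> Rabs (u j) <= M.

Section Elevel.
Variables (d : nat) (P : mat -> Prop) (f : mat -> vec) (q0 : mat).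
Hypothesis HQ : forall q, P q -> Qmatrix d q.
Hypothesis HP0 : P q0.
Hypothesis Hq0 : forall i, (i < d)%nat -> f q0 i = 0.
Hypothesis Hfsup : forall i, (i < d)%nat -> is_lub (fun x => exists q, P q /\ f q i = x) 0.
Hypothesis HQfin : forall (u : vec) i, (i < d)%nat ->
     exists l, is_lub (fun x => exists q, P q /\ x = mv d q u i + f q i) l.

Lemma Hfle q j : P q -> (j < d)%nat -> f q j <= 0.
Proof. intros Hq Hj. destruct (Hfsup j Hj) as [Hub _]. apply Hub. exists q; auto. Qed.

Notation E := (Eh d P f).

Lemma E_lub h u M i : 0 <= h -> bnd d M u -> (i < d)%nat ->
  is_lub (fun x => exists v, (exists q, P q /\ v = Sq d q (f q) h u) /\ v i = x) (E h u i).
Proof. intros Hh Hu Hi. unfold Eh. apply vsup_lub.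
 - exists (Sq d q0 (f q0) h u). exists q0; auto.
 - exists M. intros v [q [Hq ->]]. apply Sq_le_M; auto. intros; apply Hfle; auto.
   intros j Hj. specialize (Hu j Hj). apply Rabs_le_between in Hu. lra. Qed.

Lemma E_ub h u M i q : 0 <= h -> bnd d M u -> (i < d)%nat -> P q -> Sq d q (f q) h u i <= E h u i.
Proof. intros Hh Hu Hi Hq. destruct (E_lub h u M i Hh Hu Hi) as [Hub _]. apply Hub.
 exists (Sq d q (f q) h u). split; auto. exists q; auto. Qed.

Lemma E_least h u M i y : 0 <= h -> bnd d M u -> (i < d)%nat ->
  (forall q, P q -> Sq d q (f q) h u i <= y) -> E h u i <= y.
Proof. intros Hh Hu Hi Hy. destruct (E_lub h u M i Hh Hu Hi) as [_ Hl]. apply Hl.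
 intros x [v [[q [Hq ->]] <-]]. apply Hy; auto. Qed.

Lemma E_bnd h u M : 0 <= h -> bnd d M u -> bnd d M (E h u).
Proof. intros Hh Hu i Hi. apply Rabs_le. split.
 - eapply Rle_trans; [|apply (E_ub h u M i q0); auto]. apply Sq_ge_m; auto.
   intros j Hj. specialize (Hu j Hj). apply Rabs_le_between in Hu. lra.
 - apply (E_least h u M i); auto. intros q Hq. apply Sq_le_M; auto. intros; apply Hfle; auto.
   intros j Hj. specialize (Hu j Hj). apply Rabs_le_between in Hu. lra. Qed.

Lemma E_shift h u v M c : 0 <= h -> bnd d M u -> bnd d M v ->
  (forall j, (j < d)%nat -> u j <= v j + c) -> forall i, (i < d)%nat -> E h u i <= E h v i + c.
Proof. intros Hh Hu Hv Huv i Hi. apply (E_least h u M i); auto. intros q Hq.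
 eapply Rle_trans. apply Sq_shift; eauto. apply Rplus_le_compat_r. apply (E_ub h v M i q); auto. Qed.

Lemma E_semi h k u M i : 0 <= h -> 0 <= k -> bnd d M u -> (i < d)%nat ->
  E (h + k) u i <= E h (E k u) i.
Proof. intros Hh Hk Hu Hi. apply (E_least (h+k) u M i); [lra|auto|auto|]. intros q Hq.
 rewrite Rplus_comm, Sq_semigroup by auto.
 eapply Rle_trans. apply (Sq_shift d q (f q) h _ (E k u) 0); auto.
 intros j Hj. rewrite Rplus_0_r. apply (E_ub k u M j q); auto.
 rewrite Rplus_0_r. apply (E_ub h (E k u) M i q); auto. apply E_bnd; auto. Qed.

Definition wv (M : R) (j : nat) : vec := fun k => if Nat.eq_dec j k then - (2 * M) else 0.
Definition Lj (M : R) (j : nat) : R :=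
  epsilon (inhabits 0) (is_lub (fun x => exists q, P q /\ x = mv d q (wv M j) j + f q j)).
Definition CU M := sumd d (fun j => Rabs (Lj M j)).
Definition CL M := 2 * Rabs M * sumd d (fun j => Rabs (q0 j j)).
Definition CC M := CU M + CL M.

Lemma CU_nonneg M : 0 <= CU M.
Proof. apply sumd_nonneg; intros; apply Rabs_pos. Qed.
Lemma CL_nonneg M : 0 <= CL M.
Proof. unfold CL. apply Rmult_le_pos. generalize (Rabs_pos M); lra. apply sumd_nonneg; intros; apply Rabs_pos. Qed.
Lemma CC_nonneg M : 0 <= CC M.
Proof. unfold CC. generalize (CU_nonneg M) (CL_nonneg M); lra. Qed.

Lemma mv_wv q M j : (j < d)%nat -> mv d q (wv M j) j = - (2 * M) * q j j.
Proof. intros Hj. unfold mv, wv. rewrite (sumd_ext d _ (fun k => (if Nat.eq_dec j k then - (2 * M) else 0) * q j k)).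
 apply sumd_delta; auto. intros; ring. Qed.

Lemma drift_up_bound q u M j : P q -> bnd d M u -> (j < d)%nat -> mv d q u j + f q j <= CU M.
Proof. intros Hq Hu Hj.
 assert (Hl : is_lub (fun x => exists q, P q /\ x = mv d q (wv M j) j + f q j) (Lj M j)).
 { unfold Lj. apply epsilon_spec. apply HQfin; auto. }
 assert (mv d q u j <= mv d q (wv M j) j) by (rewrite mv_wv by auto; apply Qrow_bound; auto).
 assert (mv d q (wv M j) j + f q j <= Lj M j) by (apply Hl; exists q; auto).
 assert (Lj M j <= CU M).
 { eapply Rle_trans. apply Rle_abs. unfold CU. apply (sumd_ge_term d (fun j => Rabs (Lj M j))); auto. intros; apply Rabs_pos. }
 lra. Qed.

Lemma drift_down_bound u M j : bnd d M u -> (j < d)%nat -> - CL M <= mv d q0 u j + f q0 j.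
Proof. intros Hu Hj. rewrite Hq0 by auto.
 assert (H := Qrow_bound d q0 (fun k => (-1) * u k + 0 * u k) M j (HQ q0 HP0)).
 rewrite (mv_lin d q0 (-1) 0 u u j) in H.
 assert (Hb : mv d q0 u j >= 2 * M * q0 j j).
 { assert (- mv d q0 u j <= - (2 * M) * q0 j j). 2: lra.
   replace (- mv d q0 u j) with (-1 * mv d q0 u j + 0 * mv d q0 u j) by ring. apply H; auto.
   intros k Hk. replace (-1 * u k + 0 * u k) with (- u k) by ring. rewrite Rabs_Ropp. apply Hu; auto. }
 assert (Habs : Rabs (q0 j j) <= sumd d (fun j => Rabs (q0 j j))).
 { apply (sumd_ge_term d (fun j => Rabs (q0 j j))); auto. intros; apply Rabs_pos. }
 assert (2 * M * q0 j j >= - (2 * Rabs M * Rabs (q0 j j))).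
 { assert (Hm : Rabs M * Rabs (q0 j j) = Rabs (M * q0 j j)) by (rewrite Rabs_mult; auto).
   generalize (Rle_abs (- (M * q0 j j))). rewrite Rabs_Ropp. nra. }
 unfold CL. assert (2 * Rabs M * Rabs (q0 j j) <= 2 * Rabs M * sumd d (fun j => Rabs (q0 j j))).
 { apply Rmult_le_compat_l; auto. generalize (Rabs_pos M); lra. }
 lra. Qed.

Lemma E_drift h u M i : 0 <= h -> bnd d M u -> (i < d)%nat ->
  u i - h * CC M <= E h u i <= u i + h * CC M.
Proof. intros Hh Hu Hi. assert (HU := CU_nonneg M). assert (HL := CL_nonneg M). unfold CC. split.
 - eapply Rle_trans; [|apply (E_ub h u M i q0); auto].
   eapply Rle_trans; [|apply (Sq_drift_down d q0 (f q0) h u (CL M) i); auto].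
   assert (0 <= h * CU M) by (apply Rmult_le_pos; auto). nra.
   intros j Hj. apply drift_down_bound; auto.
 - apply (E_least h u M i); auto. intros q Hq.
   eapply Rle_trans. apply (Sq_drift_up d q (f q) h u (CU M) i); auto.
   intros j Hj. apply drift_up_bound; auto.
   assert (0 <= h * CL M) by (apply Rmult_le_pos; auto). nra. Qed.


Definition G (hs : list R) (u : vec) : vec := fold_right (fun h w => E h w) u hs.
Definition sumL (hs : list R) : R := fold_right Rplus 0 hs.
Definition nn (hs : list R) := Forall (fun h => 0 <= h) hs.

Lemma G_bnd hs u M : nn hs -> bnd d M u -> bnd d M (G hs u).
Proof. induction 1; intros Hu; simpl; auto. apply E_bnd; auto. Qed.

Lemma G_shift hs u v M c : nn hs -> bnd d M u -> bnd d M v ->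
  (forall j, (j < d)%nat -> u j <= v j + c) -> forall i, (i < d)%nat -> G hs u i <= G hs v i + c.
Proof. intros Hn. induction Hn; intros Hu Hv Huv i Hi; simpl; auto.
 apply (E_shift x _ _ M); auto; try apply G_bnd; auto. Qed.

Lemma G_drift hs u M i : nn hs -> bnd d M u -> (i < d)%nat ->
  u i - sumL hs * CC M <= G hs u i <= u i + sumL hs * CC M.
Proof. intros Hn Hu Hi. induction Hn; simpl. lra.
 assert (H1 := E_drift x (G l u) M i H (G_bnd l u M Hn Hu) Hi). lra. Qed.

Lemma G_app a b u : G (a ++ b) u = G a (G b u).
Proof. unfold G. apply fold_right_app. Qed.

Lemma nn_app a b : nn a -> nn b -> nn (a ++ b).
Proof. intros; apply Forall_app; auto. Qed.

Lemma G_split a b x y u M i : nn a -> nn b -> 0 <= x -> 0 <= y -> bnd d M u -> (i < d)%nat ->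
  G (a ++ (x + y) :: b) u i <= G (a ++ x :: y :: b) u i.
Proof. intros Ha Hb Hx Hy Hu. revert i. induction Ha; intros i Hi; simpl.
 - apply (E_semi x y (G b u) M i); auto. apply G_bnd; auto.
 - assert (H1 := E_shift x0 (G (l ++ (x + y) :: b) u) (G (l ++ x :: y :: b) u) M 0 H).
   enough (E x0 (G (l ++ (x + y) :: b) u) i <= E x0 (G (l ++ x :: y :: b) u) i + 0) by lra. apply H1; try assumption.
   + apply G_bnd; auto. apply nn_app; auto. constructor; auto. lra.
   + apply G_bnd; auto. apply nn_app; auto. constructor; [lra|constructor; [lra|auto]].
   + intros j Hj. rewrite Rplus_0_r. apply IHHa; auto. Qed.

Lemma exists_split (del : R) (A : list R) : 0 < del -> nn A -> del <= sumL A ->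
  exists Pl x R, A = Pl ++ x :: R /\ sumL Pl < del /\ del <= sumL Pl + x.
Proof. revert del. induction A as [|a A IH]; intros del Hd Hn Hs; simpl in *. lra.
 inversion Hn; subst. destruct (Rle_dec del a).
 - exists nil, a, A. simpl. repeat split; auto; lra.
 - destruct (IH (del - a)) as [Pl [x [R [-> [Hq1 Hq2]]]]]; auto; try lra.
   exists (a :: Pl), x, R. simpl. repeat split; auto; lra. Qed.

Lemma sumL_app a b : sumL (a ++ b) = sumL a + sumL b.
Proof. induction a; simpl; auto. lra. rewrite IHa. lra. Qed.

Lemma sumL_nn a : nn a -> 0 <= sumL a.
Proof. induction 1; simpl; lra. Qed.

Lemma grid_lemma del M : 0 < del -> forall N A u, nn A -> sumL A = INR N * del -> bnd d M u ->
  forall i, (i < d)%nat -> G A u i <= G (repeat del N) u i + 2 * CC M * del * INR (length A).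
Proof. intros Hd N. assert (HC := CC_nonneg M). induction N; intros A u Hn Hs Hu i Hi.
 - simpl in Hs. rewrite Rmult_0_l in Hs. simpl.
   destruct (G_drift A u M i Hn Hu Hi). rewrite Hs in *.
   assert (0 <= 2 * CC M * del * INR (length A)) by (apply Rmult_le_pos; [nra| apply pos_INR]). nra.
 - destruct (exists_split del A Hd Hn) as [Pl [x [Rl [HA [Hsp1 Hsp2]]]]].
   { rewrite Hs, S_INR. assert (0 <= INR N) by apply pos_INR. nra. }
   subst A. set (y := del - sumL Pl). set (z := x - y).
   assert (HnP : nn Pl) by (apply Forall_app in Hn; tauto).
   assert (HnxR : nn (x :: Rl)) by (apply Forall_app in Hn; tauto).
   inversion HnxR; subst.
   assert (Hy : 0 <= y) by (unfold y; lra). assert (Hz : 0 <= z) by (unfold z, y; lra).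
   assert (HnzR : nn (z :: Rl)) by (constructor; auto).
   assert (Hsum : sumL (z :: Rl) = INR N * del).
   { rewrite sumL_app, S_INR in Hs. simpl sumL in Hs. simpl sumL. unfold z, y. lra. }
   assert (IH := IHN (z :: Rl) u HnzR Hsum Hu).
   assert (Hxe : x = y + z) by (unfold z; ring).
   assert (Hstep1 : G (Pl ++ x :: Rl) u i <= G (Pl ++ y :: z :: Rl) u i).
   { rewrite Hxe. apply (G_split Pl Rl y z u M i); auto. }
   replace (Pl ++ y :: z :: Rl) with ((Pl ++ y :: nil) ++ z :: Rl) in Hstep1 by (rewrite <- app_assoc; reflexivity).
   rewrite (G_app (Pl ++ y :: nil) (z :: Rl)) in Hstep1.
   assert (HnPy : nn (Pl ++ y :: nil)) by (apply nn_app; auto; constructor; auto).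
   set (c := 2 * CC M * del * INR (length (z :: Rl))).
   assert (Hw1 : bnd d M (G (z :: Rl) u)) by (apply G_bnd; auto).
   assert (Hw2 : bnd d M (G (repeat del N) u)) by (apply G_bnd; auto; apply Forall_forall; intros h Hh; apply repeat_spec in Hh; lra).
   assert (Hstep2 : G (Pl ++ y :: nil) (G (z :: Rl) u) i <= G (Pl ++ y :: nil) (G (repeat del N) u) i + c).
   { apply (G_shift _ _ _ M); auto. }
   assert (Hlen : length (Pl ++ x :: Rl) = (length Pl + length (z :: Rl))%nat) by (rewrite length_app; reflexivity).
   rewrite Hlen, plus_INR. fold c.
   change (G (repeat del (S N)) u i) with (E del (G (repeat del N) u) i).
   assert (HcP : 0 <= c) by (unfold c; apply Rmult_le_pos; [nra|apply pos_INR]).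
   destruct Pl as [|p Pl'].
   + assert (Hyd : y = del) by (unfold y; simpl sumL; ring).
     replace (G (nil ++ y :: nil) (G (repeat del N) u) i) with (E del (G (repeat del N) u) i) in Hstep2 by (rewrite Hyd; reflexivity).
     change (INR (length (@nil R))) with 0. rewrite Rplus_0_l. fold c. lra.
   + assert (Hs1 : sumL ((p :: Pl') ++ y :: nil) = del) by (rewrite sumL_app; unfold y; simpl sumL; ring).
     destruct (G_drift ((p :: Pl') ++ y :: nil) (G (repeat del N) u) M i HnPy Hw2 Hi) as [_ Hup].
     destruct (E_drift del (G (repeat del N) u) M i ltac:(lra) Hw2 Hi) as [Hlo _].
     rewrite Hs1 in Hup.
     assert (1 <= INR (length (p :: Pl'))) by (simpl length; rewrite S_INR; generalize (pos_INR (length Pl')); lra).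
     assert (2 * CC M * del * INR (length (p :: Pl')) >= 2 * CC M * del * 1).
     { apply Rle_ge, Rmult_le_compat_l; auto. nra. }
     rewrite Rmult_plus_distr_l. fold c. lra. Qed.


Lemma Epi_aux_G l u : Epi_aux d P f l u = G (diffs l) u.
Proof. induction l as [|a l IH]; auto. destruct l as [|b l]; auto.
 change (Epi_aux d P f (a :: b :: l) u) with (Eh d P f (b - a) (Epi_aux d P f (b :: l) u)).
 rewrite IH. reflexivity. Qed.

Lemma iterv_G n h u : iterv n (E h) u = G (repeat h n) u.
Proof. induction n; simpl; auto. rewrite IHn. reflexivity. Qed.

Lemma nn_pos l : Forall (fun h => 0 < h) l -> nn l.
Proof. intros H. eapply Forall_impl; [|exact H]. intros; simpl; lra. Qed.

Lemma nn_repeat h n : 0 <= h -> nn (repeat h n).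
Proof. intros Hh. apply Forall_forall; intros x Hx; apply repeat_spec in Hx; lra. Qed.

Lemma sumL_repeat h n : sumL (repeat h n) = INR n * h.
Proof. induction n; simpl repeat; simpl sumL. simpl; ring. rewrite IHn, S_INR. ring. Qed.

Lemma part_pos t l : 0 < t -> partition t l ->
  exists b r, l = 0 :: b :: r /\ Epi d P f l = G (diffs l) /\ nn (diffs l) /\ sumL (diffs l) = t.
Proof. intros Ht [[r ->] [Hinc Hlast]]. destruct r as [|b r].
 - simpl in Hlast. lra.
 - exists b, r. split; auto. split.
   + unfold Epi. apply functional_extensionality; intros u. apply Epi_aux_G.
   + split. apply nn_pos, incr_diffs; auto. unfold sumL. rewrite sum_diffs, Hlast. ring. Qed.

Lemma part_zero l : partition 0 l -> l = 0 :: nil.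
Proof. intros [[r ->] [Hinc Hlast]]. destruct r as [|b r]; auto.
 assert (H := last_gt 0 b r Hinc). lra. Qed.

Lemma ul_part n t : (0 < n)%nat -> 0 < t -> partition t (ul n (t / INR n)) /\
  Epi d P f (ul n (t / INR n)) = G (repeat (t / INR n) n).
Proof. intros Hn Ht. assert (HnR : 0 < INR n) by (apply lt_0_INR; auto).
 assert (Hd : 0 < t / INR n) by (apply Rdiv_lt_0_compat; auto).
 split. split; [|split].
 - exists (map (fun k => INR k * (t / INR n)) (seq 1 n)). unfold ul. simpl. f_equal. ring.
 - apply ul_incr. intros j. rewrite S_INR. nra.
 - unfold ul. rewrite ul_last. rewrite Nat.add_0_l. field. lra.
 - destruct n as [|n]; [lia|]. unfold ul. 
   change (seq 0 (S (S n))) with (0%nat :: seq 1 (S n)). change (seq 1 (S n)) with (1%nat :: seq 2 n).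
   simpl map. unfold Epi. apply functional_extensionality; intros u.
   change (Epi_aux d P f (INR 0 * (t / INR (S n)) :: INR 1 * (t / INR (S n)) :: map (fun k : nat => INR k * (t / INR (S n))) (seq 2 n)) u = G (repeat (t / INR (S n)) (S n)) u).
   rewrite Epi_aux_G. f_equal.
   change (INR 0 * (t / INR (S n)) :: INR 1 * (t / INR (S n)) :: map (fun k : nat => INR k * (t / INR (S n))) (seq 2 n)) with (map (fun k : nat => INR k * (t / INR (S n))) (seq 0 (S (S n)))).
   apply ul_gen. intros j. rewrite S_INR. ring. Qed.

Lemma lub_single (S : R -> Prop) x : S x -> (forall y, S y -> y = x) -> is_lub S x.
Proof. intros Hx Hy. split. intros y Hs. rewrite (Hy y Hs). lra. intros b Hb. apply Hb; auto. Qed.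

Lemma main_sec t u0 : 0 <= t -> forall i, (i < d)%nat ->
    Nisio d P f t u0 i
      = vsup (fun v => exists n : nat, (0 < n)%nat /\
                 v = iterv n (E (t / INR n)) u0) i
    /\ Un_cv (fun n => iterv (2 ^ n)%nat (E (t / 2 ^ n)) u0 i) (Nisio d P f t u0 i).
Proof. intros Ht i Hi. set (M := nrm d u0).
 assert (Hu0 : bnd d M u0) by (intros j Hj; apply coord_le_nrm; auto).
 assert (HC := CC_nonneg M).
 set (US := fun v => exists n : nat, (0 < n)%nat /\ v = iterv n (E (t / INR n)) u0).
 set (NS := fun v => exists l, partition t l /\ v = Epi d P f l u0).
 assert (HUSb : forall v, US v -> v i <= M).
 { intros v [n [Hn ->]]. rewrite iterv_G. 
   assert (0 <= t / INR n) by (apply Rdiv_le_0_compat; auto; apply lt_0_INR; auto).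
   assert (Hb := G_bnd _ _ M (nn_repeat _ n H) Hu0 i Hi). apply Rabs_le_between in Hb. lra. }
 assert (HUSlub : is_lub (fun x => exists v, US v /\ v i = x) (vsup US i)).
 { apply vsup_lub. exists (iterv 1 (E (t / INR 1)) u0). exists 1%nat; auto. exists M; auto. }
 destruct (Req_dec t 0) as [Ht0|Ht0].
 -
   subst t.
   assert (Hgrid : forall n h, h = 0 -> G (repeat h n) u0 i = u0 i).
   { intros n h ->. destruct (G_drift (repeat 0 n) u0 M i (nn_repeat 0 n (Rle_refl 0)) Hu0 Hi).
     rewrite sumL_repeat in *. rewrite Rmult_0_r, Rmult_0_l in *. lra. }
   assert (HN : Nisio d P f 0 u0 i = u0 i).
   { apply (is_lub_u (fun x => exists v, NS v /\ v i = x)).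
     - unfold Nisio. apply vsup_lub. exists (Epi d P f (0 :: nil) u0). exists (0 :: nil). split; auto.
       split. exists nil; auto. split; simpl; auto.
       exists (u0 i). intros v [l [Hl ->]]. rewrite (part_zero l Hl). simpl.
       destruct (E_drift 0 u0 M i (Rle_refl 0) Hu0 Hi). lra.
     - apply lub_single. exists (Epi d P f (0 :: nil) u0). split. exists (0 :: nil). split; auto.
       split. exists nil; auto. split; simpl; auto. simpl.
       destruct (E_drift 0 u0 M i (Rle_refl 0) Hu0 Hi). lra.
       intros y [v [[l [Hl ->]] <-]]. rewrite (part_zero l Hl). simpl.
       destruct (E_drift 0 u0 M i (Rle_refl 0) Hu0 Hi). lra. }
   rewrite HN. split.
   + apply (is_lub_u (fun x => exists v, US v /\ v i = x)).
     apply lub_single. exists (iterv 1 (E (0 / INR 1)) u0). split. exists 1%nat; auto.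
     rewrite iterv_G. apply Hgrid. unfold Rdiv; ring.
     intros y [v [[n [Hn ->]] <-]]. rewrite iterv_G. apply Hgrid. unfold Rdiv; ring.
     exact HUSlub.
   + intros eps He. exists 0%nat. intros n _. rewrite iterv_G, Hgrid. unfold R_dist. rewrite Rminus_diag, Rabs_R0; auto.
     unfold Rdiv; ring.
 - assert (Htp : 0 < t) by lra.
   assert (HNlub : is_lub (fun x => exists v, NS v /\ v i = x) (Nisio d P f t u0 i)).
   { unfold Nisio. apply vsup_lub.
     - exists (Epi d P f (0 :: t :: nil) u0). exists (0 :: t :: nil). split; auto.
       split. exists (t :: nil); auto. split; simpl; auto.
     - exists M. intros v [l [Hl ->]]. destruct (part_pos t l Htp Hl) as [b [r [_ [-> [Hnn _]]]]].
       assert (Hb := G_bnd _ _ M Hnn Hu0 i Hi). apply Rabs_le_between in Hb. lra. }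
   assert (K1 : forall n, (0 < n)%nat -> G (repeat (t / INR n) n) u0 i <= Nisio d P f t u0 i).
   { intros n Hn. destruct (ul_part n t Hn Htp) as [Hp He]. apply HNlub.
     exists (Epi d P f (ul n (t / INR n)) u0). split. exists (ul n (t / INR n)); auto. rewrite He; auto. }
   assert (K2 : forall l n, partition t l ->
     Epi d P f l u0 i <= G (repeat (t / 2 ^ n) (2 ^ n)) u0 i + 2 * CC M * INR (length (diffs l)) * t / 2 ^ n).
   { intros l n Hl. destruct (part_pos t l Htp Hl) as [b [r [_ [-> [Hnn Hs]]]]].
     assert (Hp : 0 < 2 ^ n) by (apply pow_lt; lra).
     assert (HI : INR (2 ^ n) = 2 ^ n) by (rewrite pow_INR; reflexivity).
     assert (H := grid_lemma (t / 2 ^ n) M ltac:(apply Rdiv_lt_0_compat; auto) (2 ^ n) (diffs l) u0 Hnn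
       ltac:(rewrite Hs, HI; field; lra) Hu0 i Hi).
     replace (2 * CC M * INR (length (diffs l)) * t / 2 ^ n) with (2 * CC M * (t / 2 ^ n) * INR (length (diffs l))) by (field; lra).
     exact H. }
   assert (HI : forall n, t / INR (2 ^ n) = t / 2 ^ n) by (intros; rewrite pow_INR; reflexivity).
   assert (Hpos : forall n, (0 < 2 ^ n)%nat) by (intros; apply Nat.neq_0_lt_0, Nat.pow_nonzero; lia).
   assert (K3 : forall n, G (repeat (t / 2 ^ n) (2 ^ n)) u0 i <= Nisio d P f t u0 i).
   { intros n. rewrite <- HI. apply K1; auto. }
   split.
   + apply (is_lub_u (fun x => exists v, US v /\ v i = x)); [|exact HUSlub]. split.
     * intros x [v [[n [Hn ->]] <-]]. rewrite iterv_G. apply K1; auto.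
     * intros y Hy. apply HNlub. intros x [v [[l [Hl ->]] <-]].
       apply Rnot_lt_le. intros Hlt.
       set (K := 2 * CC M * INR (length (diffs l)) * t).
       assert (HK : 0 <= K) by (unfold K; apply Rmult_le_pos; [apply Rmult_le_pos; [lra|apply pos_INR]|lra]).
       destruct (small_pow2 K (Epi d P f l u0 i - y) HK ltac:(lra)) as [N0 HN0].
       assert (H1 := K2 l N0 Hl). specialize (HN0 N0 (le_n _)).
       assert (H2 : G (repeat (t / 2 ^ N0) (2 ^ N0)) u0 i <= y).
       { apply Hy. exists (G (repeat (t / 2 ^ N0) (2 ^ N0)) u0). split; auto.
         exists (2 ^ N0)%nat. split; auto. rewrite iterv_G, HI. reflexivity. }
       unfold K in HN0. unfold Rdiv in *. lra.
   + intros eps He.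
     assert (Hex : exists l, partition t l /\ Nisio d P f t u0 i - eps / 2 < Epi d P f l u0 i).
     { apply NNPP. intros Hno. 
       assert (Nisio d P f t u0 i <= Nisio d P f t u0 i - eps / 2). 2: lra.
       apply HNlub. intros x [v [[l [Hl ->]] <-]]. apply Rnot_lt_le. intros Hlt. apply Hno. exists l; auto. }
     destruct Hex as [l [Hl Hgt]].
     set (K := 2 * CC M * INR (length (diffs l)) * t).
     assert (HK : 0 <= K) by (unfold K; apply Rmult_le_pos; [apply Rmult_le_pos; [lra|apply pos_INR]|lra]).
     destruct (small_pow2 K (eps / 2) HK ltac:(lra)) as [N0 HN0].
     exists N0. intros n Hn. specialize (HN0 n ltac:(lia)).
     assert (H1 := K2 l n Hl). assert (H3 := K3 n).
     rewrite iterv_G. unfold R_dist. rewrite Rabs_left1 by lra.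
     unfold K in HN0. unfold Rdiv in *. lra. Qed.

End Elevel.


Theorem mainTheorem7 (d : nat) (P : mat -> Prop) (f : mat -> vec)
  (HQ : forall q, P q -> Qmatrix d q)
  (Hf0 : exists q0, P q0 /\ forall i, (i < d)%nat -> f q0 i = 0)
  (Hfsup : forall i, (i < d)%nat -> is_lub (fun x => exists q, P q /\ f q i = x) 0)
  (HQfin : forall (u : vec) i, (i < d)%nat ->
     exists l, is_lub (fun x => exists q, P q /\ x = mv d q u i + f q i) l)
  (t : R) (u0 : vec) (Ht : 0 <= t) :
  forall i, (i < d)%nat ->
    Nisio d P f t u0 i
      = vsup (fun v => exists n : nat, (0 < n)%nat /\
                 v = iterv n (Eh d P f (t / INR n)) u0) i
    /\ Un_cv (fun n => iterv (2 ^ n)%nat (Eh d P f (t / 2 ^ n)) u0 i) (Nisio d P f t u0 i).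
Proof.
  destruct Hf0 as [q0 [HP0 Hq0]].
  intros i Hi. eapply main_sec; eauto.
Qed.
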